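(* Let $A$ be a $d\times n$ integer matrix with columns $\underline a_1,\dots,\underline a_n$, put $\underline a_0=0$, and let $\widetilde A$ be the $(d+1)\times(n+1)$ matrix with columns $(1,\underline a_i)$, $i=0,\dots,n$. Assume $\mathbb{Z}\widetilde A=\mathbb{Z}^{d+1}$, $\mathbb{N}\widetilde A=\mathbb{Z}^{d+1}\cap\mathbb{R}_{\geq0}\widetilde A$, and $\mathrm{int}(\mathbb{N}\widetilde A)=\mathbb{N}\widetilde A+\widetilde c$ for some $\widetilde c\in\mathbb{N}\widetilde A$. For $u\in\{0,\dots,n\}$ let $A_u$ be the $d\times n$ matrix with columns $\underline a_i-\underline a_u$, $i\in\{0,\dots,n\}\setminus\{u\}$. Then (1) $\mathbb{Z}A_u=\mathbb{Z}^d$; (2) $\mathbb{N}A_u=\mathbb{Z}^d\cap\mathbb{R}_{\geq0}A_u$; (3) $\mathrm{int}(\mathbb{N}A_u)=\mathbb{N}A_u+c$ for some $c\in\mathbb{N}A_u$.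
   Context: For an integer matrix $M$ with $m$ rows, $\mathbb{Z}M$, $\mathbb{N}M$, $\mathbb{R}_{\ge0}M$ denote the group, semigroup and real cone generated by its columns, and $\mathrm{int}(\mathbb{N}M)=\mathbb{Z}^m\cap(\mathbb{R}_{\geq0}M)^\circ$ with $(\cdot)^\circ$ the topological interior. *)

(* Defs.v *)
From HB Require Import structures.
From mathcomp Require Import all_boot all_order all_algebra.
From mathcomp Require Import reals.
Set Implicit Arguments. Unset Strict Implicit. Unset Printing Implicit Defensive.
Import Order.TTheory GRing.Theory Num.Theory.
Local Open Scope ring_scope.

Definition Zgen m n (M : 'M[int]_(m, n)) (x : 'cV[int]_m) : Prop :=
  exists l : 'cV[int]_n, x = M *m l.

Definition Ngen m n (M : 'M[int]_(m, n)) (x : 'cV[int]_m) : Prop :=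
  exists l : 'cV[int]_n, (forall j, 0 <= l j 0) /\ x = M *m l.

Definition Rcone (R : realType) m n (M : 'M[int]_(m, n)) (x : 'cV[R]_m) : Prop :=
  exists l : 'cV[R]_n, (forall j, 0 <= l j 0) /\ x = map_mx (fun z : int => z%:~R) M *m l.

Arguments Rcone R {m n} M x.

(* topological interior in R^m (product = sup-norm topology) *)
Definition interior_pt (R : realType) m (S : 'cV[R]_m -> Prop) (x : 'cV[R]_m) : Prop :=
  exists e : R, 0 < e /\ forall y : 'cV[R]_m, (forall i, `|y i 0 - x i 0| < e) -> S y.

(* int(NM) = Z^m ∩ (R_{>=0} M)° *)
Definition intN (R : realType) m n (M : 'M[int]_(m, n)) (x : 'cV[int]_m) : Prop :=
  interior_pt (Rcone R M) (map_mx (fun z : int => z%:~R) x).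

Definition gen_Zm m n (M : 'M[int]_(m, n)) : Prop := forall x, Zgen M x.
Definition normal_sat (R : realType) m n (M : 'M[int]_(m, n)) : Prop :=
  forall x, Ngen M x <-> Rcone R M (map_mx (fun z : int => z%:~R) x).
Definition gorenstein_like (R : realType) m n (M : 'M[int]_(m, n)) : Prop :=
  exists c, Ngen M c /\ forall x, intN R M x <-> exists y, Ngen M y /\ x = y + c.

Definition Abar d n (A : 'M[int]_(d, n)) : 'M[int]_(d, 1 + n) := row_mx 0 A.

Definition Atilde d n (A : 'M[int]_(d, n)) : 'M[int]_(1 + d, 1 + n) :=
  col_mx (const_mx 1) (Abar A).

Definition Au d n (A : 'M[int]_(d, n)) (u : 'I_(1 + n)) : 'M[int]_(d, n) :=
  \matrix_(k, j) (Abar A k (lift u j) - Abar A k u).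

(* Main.v *)
Require Import Defs.
From HB Require Import structures.
From mathcomp Require Import all_boot all_order all_algebra.
From mathcomp Require Import reals.
From mathcomp Require Import ring lra.
Set Implicit Arguments. Unset Strict Implicit. Unset Printing Implicit Defensive.
Import Order.TTheory GRing.Theory Num.Theory.
Local Open Scope ring_scope.

Lemma split_ord m1 m2 (P : 'I_(m1 + m2) -> Prop) :
  (forall i, P (lshift m2 i)) -> (forall k, P (rshift m1 k)) -> forall i, P i.
Proof. by move=> h1 h2 i; rewrite -(splitK i); case: (split i) => j /=. Qed.

Section Bound.
Variable R : realType.

Lemma sum_delta d (w : 'cV[R]_d) : \sum_i w i 0 *: delta_mx i 0 = w.
Proof.
by rewrite {2}(matrix_sum_delta w); apply: eq_bigr => i _; rewrite big_ord1.
Qed.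

Lemma bound_ball d n (B : 'M[R]_(d, n)) (x : 'cV[R]_d) :
  interior_pt (fun y => exists l : 'cV[R]_n, (forall j, 0 <= l j 0) /\ y = B *m l) x ->
  exists M e, 0 < e /\ forall z : 'cV[R]_d, (forall i, `|z i 0 - x i 0| < e) ->
    exists l : 'cV[R]_n, [/\ forall j, 0 <= l j 0, z = B *m l & \sum_j l j 0 <= M].
Proof.
case=> e0 [e0p hin].
set δ := e0 / 2.
have δp : 0 < δ by rewrite /δ divr_gt0.
have δe : δ < e0 by rewrite /δ; lra.
have hs : forall s : R, `|s| <= δ -> forall i : 'I_d,
    exists l : 'cV[R]_n, (forall j, 0 <= l j 0) /\ x + s *: delta_mx i 0 = B *m l.
  move=> s hs i; apply: hin => k; rewrite !mxE addrAC subrr add0r andbT.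
  by case: (k == i) => /=; rewrite ?mulr1 ?mulr0 ?normr0 //; apply: le_lt_trans δe.
have h1 : `|δ| <= δ by rewrite ger0_norm // ltW.
have h2 : `|- δ| <= δ by rewrite normrN.
have [lp hp] := fin_all_exists (hs δ h1).
have [lq hq] := fin_all_exists (hs (- δ) h2).
have [lx [lx0 hlx]] : exists l : 'cV[R]_n, (forall j, 0 <= l j 0) /\ x = B *m l.
  by apply: hin => k; rewrite subrr normr0.
pose S (l : 'cV[R]_n) := \sum_j l j 0.
have S0 (l : 'cV[R]_n) : (forall j, 0 <= l j 0) -> 0 <= S l by move=> h; apply: sumr_ge0 => j _.
pose c := ((d.+1)%:R : R)^-1.
have c0 : 0 <= c by rewrite invr_ge0 ler0n.
have c1 : c *+ d.+1 = 1 by rewrite -mulr_natr mulVf // pnatr_eq0.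
exists (S lx + \sum_i (S (lp i) + S (lq i))), (δ / (d.+1)%:R).
split; first by rewrite divr_gt0 // ltr0Sn.
move=> z hz.
pose w := z - x.
pose β i := `|w i 0| / δ.
pose sg i := if 0 <= w i 0 then δ else - δ.
pose r i := if 0 <= w i 0 then lp i else lq i.
pose α := 1 - \sum_i β i.
have β0 i : 0 <= β i by rewrite /β divr_ge0 // ltW.
have βc i : β i <= c.
  rewrite /β; apply: (@le_trans _ _ (δ / (d.+1)%:R / δ)).
    apply: ler_wpM2r; first by rewrite invr_ge0 ltW.
    by apply: ltW; rewrite /w !mxE; apply: hz.
  by rewrite mulrAC divff ?mul1r // gt_eqF.
have c1' : c <= 1 by rewrite -c1 mulrS lerDl mulrn_wge0.
have βs : \sum_i β i <= 1.
  apply: (@le_trans _ _ (\sum_(i < d) c)); first by apply: ler_sum => i _.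
  by rewrite sumr_const card_ord -c1 mulrS lerDr.
have α0 : 0 <= α by rewrite /α subr_ge0.
have α1 : α <= 1 by rewrite /α lerBlDr lerDl sumr_ge0.
have r0 i j : 0 <= r i j 0 by rewrite /r; case: ifP => _; [exact: (hp i).1 | exact: (hq i).1].
have Br i : B *m r i = x + sg i *: delta_mx i 0.
  by rewrite /r /sg; case: ifP => _; [rewrite -(hp i).2 | rewrite -(hq i).2].
have βsg i : β i * sg i = w i 0.
  rewrite /β /sg; case: ifP => h.
    by rewrite ger0_norm // mulfVK // gt_eqF.
  by rewrite ltr0_norm ?ltNge ?h // mulrN mulfVK ?opprK // gt_eqF.
exists (α *: lx + \sum_i β i *: r i); split.
- move=> j; rewrite !mxE summxE; apply: addr_ge0; first by apply: mulr_ge0.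
  by apply: sumr_ge0 => i _; rewrite mxE mulr_ge0.
- rewrite mulmxDr -scalemxAr mulmx_sumr.
  under eq_bigr do rewrite -scalemxAr Br scalerDr scalerA βsg.
  rewrite big_split /= -scaler_suml sum_delta -hlx addrA -scalerDl /α subrK scale1r.
  by rewrite /w addrC subrK.
- have -> : \sum_j (α *: lx + \sum_i β i *: r i) j 0 = α * S lx + \sum_i β i * S (r i).
    under eq_bigr do rewrite !mxE summxE.
    rewrite big_split /= -mulr_sumr; congr (_ + _).
    rewrite exchange_big /=; apply: eq_bigr => i _; rewrite mulr_sumr.
    by apply: eq_bigr => j _; rewrite mxE.
  apply: lerD; first by rewrite ler_piMl // S0.
  apply: ler_sum => i _; apply: (@le_trans _ _ (S (r i))).
    by rewrite ler_piMl ?S0 // (le_trans (βc i)).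
  rewrite /r; case: ifP => _.
    by rewrite lerDl S0 // => j; exact: (hq i).1.
  by rewrite lerDr S0 // => j; exact: (hp i).1.
Qed.
End Bound.

Section Gen.
Variable K : comNzRingType.
Variables (d n : nat) (M : 'M[K]_(d, 1+n)) (u : 'I_(1+n)).
Definition Mu : 'M[K]_(d, n) := \matrix_(k, j) (M k (lift u j) - M k u).
Definition dropv (L : 'cV[K]_(1+n)) : 'cV[K]_n := \col_j L (lift u j) 0.
Definition extv (t : K) (l : 'cV[K]_n) : 'cV[K]_(1+n) :=
  \col_i (if unlift u i is Some j then l j 0 else t - \sum_j l j 0).
Definition Mt : 'M[K]_(1 + d, 1 + n) := col_mx (const_mx 1) M.
Definition piv (X : 'cV[K]_(1+d)) : 'cV[K]_d := dsubmx X - (usubmx X 0 0) *: col u M.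

Lemma sum_ext t l : \sum_i extv t l i 0 = t.
Proof.
rewrite (bigD1_ord u) //= !mxE unlift_none.
under eq_bigr do rewrite mxE liftK.
by rewrite subrK.
Qed.

Lemma drop_ext t l : dropv (extv t l) = l.
Proof. by apply/matrixP => j k; rewrite !mxE liftK (ord1 k). Qed.

Lemma K1 L : Mu *m dropv L = M *m L - (\sum_i L i 0) *: col u M.
Proof.
apply/matrixP => k j; rewrite !mxE (bigD1_ord u) //= (bigD1_ord u) //=.
under eq_bigr do rewrite !mxE mulrBl.
rewrite (ord1 j) sumrB -mulr_sumr.
ring.
Qed.


Lemma Mt_mul L : Mt *m L = col_mx (\sum_i L i 0)%:M (M *m L).
Proof.
rewrite /Mt mul_col_mx; congr col_mx.
apply/matrixP => i j; rewrite (ord1 i) (ord1 j) !mxE /=.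
by apply: eq_bigr => k _; rewrite mxE mul1r.
Qed.

Lemma pi_Mt L : piv (Mt *m L) = Mu *m dropv L.
Proof. by rewrite K1 Mt_mul /piv col_mxKu col_mxKd mxE eqxx mulr1n. Qed.

Lemma pi_lift t x : piv (col_mx t%:M (x + t *: col u M)) = x.
Proof. by rewrite /piv col_mxKu col_mxKd mxE eqxx mulr1n addrK. Qed.

Lemma Mt_ext t l : Mt *m extv t l = col_mx t%:M (Mu *m l + t *: col u M).
Proof.
rewrite Mt_mul sum_ext; congr col_mx.
by rewrite -{2}(drop_ext t l) K1 sum_ext subrK.
Qed.

Lemma piD X Y : piv (X + Y) = piv X + piv Y.
Proof.
rewrite /piv linearD /= [usubmx (X + Y)]linearD /= mxE scalerDl.
by rewrite opprD addrACA.
Qed.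
End Gen.

Section Ext.
Variable K : numDomainType.
Lemma ext_ge0 n (u : 'I_(1+n)) (t : K) (l : 'cV[K]_n) :
  (forall j, 0 <= l j 0) -> \sum_j l j 0 <= t -> forall i, 0 <= extv u t l i 0.
Proof.
move=> l0 lt i; rewrite mxE; case: unlift => [j|] //.
by rewrite subr_ge0.
Qed.
End Ext.

Lemma normAB (R : realType) (p q r s e : R) :
  `|p - (r - q * s)| < e -> `|p + q * s - r| < e.
Proof. by rewrite (_ : p + q * s - r = p - (r - q * s)) //; ring. Qed.

Section Main.
Variables (R : realType) (d n : nat) (A : 'M[int]_(d, n)) (u : 'I_(1+n)).
Local Notation mi := (map_mx (fun z : int => z%:~R : R)).
Local Notation Ab := (Abar A).

Lemma miAu : mi (Au A u) = Mu (mi Ab) u.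
Proof. by apply/matrixP => i j; rewrite !mxE rmorphB. Qed.

Lemma miAt : mi (Atilde A) = Mt (mi Ab).
Proof. by rewrite /Atilde /Mt map_col_mx map_const_mx rmorph1. Qed.

Lemma mi_pi X : mi (piv Ab u X) = piv (mi Ab) u (mi X).
Proof. by apply/matrixP => i j; rewrite !mxE rmorphB rmorphM. Qed.

Lemma mi_lift (t : int) x : mi (col_mx t%:M (x + t *: col u Ab)) =
  col_mx (t%:~R)%:M (mi x + t%:~R *: col u (mi Ab)).
Proof.
rewrite map_col_mx; congr col_mx; apply/matrixP => i j; rewrite !mxE ?rmorphD ?rmorphM //.
by rewrite rmorphMn.
Qed.

Lemma Ngen_pi X : Ngen (Atilde A) X -> Ngen (Au A u) (piv Ab u X).
Proof.
case=> L [L0 ->]; exists (dropv u L); split; first by move=> j; rewrite mxE.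
by rewrite pi_Mt.
Qed.

Lemma Ngen_lift x : Ngen (Au A u) x ->
  exists T : int, Ngen (Atilde A) (col_mx T%:M (x + T *: col u Ab)).
Proof.
case=> l [l0 ->]; exists (\sum_j l j 0); exists (extv u (\sum_j l j 0) l); split.
  by apply: ext_ge0.
by rewrite Mt_ext.
Qed.

Lemma proj_int X : intN R (Atilde A) X -> intN R (Au A u) (piv Ab u X).
Proof.
rewrite /intN mi_pi => -[e [e0 he]]; exists e; split => // z hz.
set t := (mi X) (lshift d 0) 0.
have : Rcone R (Atilde A) (col_mx t%:M (z + t *: col u (mi Ab))).
  apply: he; apply: split_ord => [i|k].
    by rewrite (ord1 i) col_mxEu mxE eqxx mulr1n /t subrr normr0.
  rewrite col_mxEd; have := hz k; rewrite /t !mxE.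
  by apply: normAB.
case=> L [L0 hL]; exists (dropv u L); split; first by move=> j; rewrite mxE.
by rewrite -[z](pi_lift (mi Ab) u t) hL miAt pi_Mt miAu.
Qed.

Lemma lift_int x : intN R (Au A u) x ->
  exists T : int, intN R (Atilde A) (col_mx T%:M (x + T *: col u Ab)).
Proof.
rewrite /intN /Rcone => hx.
have [M [e [e0 hb]]] := bound_ball hx.
rewrite miAu in hb.
exists (Num.ceil M + 1); rewrite mi_lift miAt.
move: (map_mx (fun z : int => z%:~R : R) (Abar A)) hb => Mr hb.
set a := \sum_k `|Mr k u|.
have a0 : 0 <= a by apply: sumr_ge0.
have a1 : 0 < 1 + a by lra.
set e' := Num.min 1 (e / (1 + a)).
have e'0 : 0 < e' by rewrite lt_min ltr01 divr_gt0.
have e'1 : e' <= 1 by rewrite ge_min lexx.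
have e'2 : e' * (1 + a) <= e.
  have : e' <= e / (1 + a) by rewrite ge_min lexx orbT.
  by rewrite -(ler_pM2r a1) mulfVK // gt_eqF.
exists e'; split => // Z hZ.
set TR := ((Num.ceil M + 1)%:~R : R).
set t := Z (lshift d 0) 0.
have ht : `|t - TR| < e'.
  by have := hZ (lshift d 0); rewrite col_mxEu mxE eqxx mulr1n.
set z' := piv (Mr) u Z.
have hz' : forall k, `|z' k 0 - mi x k 0| < e.
  move=> k; have := hZ (rshift 1 k); rewrite col_mxEd.
  rewrite /z' /piv !mxE -/t.
  set p := Z (rshift 1 k) 0; set ak := Mr k u; set xk := ((x k 0)%:~R : R).
  move=> hp.
  have hak : `|ak| <= a.
    by rewrite /a (bigD1 k) //= lerDl sumr_ge0.
  have e1 : p - t * ak - xk = (p - (xk + TR * ak)) - (t - TR) * ak by ring.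
  rewrite e1.
  have h1 := ler_normB (p - (xk + TR * ak)) ((t - TR) * ak).
  have h3 : `|(t - TR) * ak| <= e' * a.
    rewrite normrM; apply: ler_pM => //; exact: ltW.
  lra.
have [l [l0 hzl hlM]] := hb z' hz'.
exists (extv u t l); split.
  apply: ext_ge0 => //.
  have hc := Num.Theory.ceil_ge M.
  have : TR = (Num.ceil M)%:~R + 1 by rewrite /TR rmorphD rmorph1.
  move=> hT; rewrite hT in ht.
  have h2 : - (t - ((Num.ceil M)%:~R + 1)) <= `|t - ((Num.ceil M)%:~R + 1)|.
    by rewrite -normrN ler_norm.
  lra.
rewrite (Mt_ext Mr u t l) -hzl /z' /piv [usubmx Z 0 0]mxE -/t subrK.
rewrite -[Z in LHS]vsubmxK; congr col_mx.
by rewrite [LHS]mx11_scalar mxE.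
Qed.
End Main.

Theorem lemma3p4 (R : realType) (d n : nat) (A : 'M[int]_(d, n)) :
  gen_Zm (Atilde A) ->
  normal_sat R (Atilde A) ->
  gorenstein_like R (Atilde A) ->
  forall u : 'I_(1 + n),
    [/\ gen_Zm (Au A u), normal_sat R (Au A u) & gorenstein_like R (Au A u)].
Proof.
move=> hgen hns [ct [hct hiff]] u; split.
- move=> x; have [L hL] := hgen (col_mx 0 x).
  rewrite /Atilde -/(Mt _) Mt_mul in hL; case/eq_col_mx: hL => h0 hx.
  have hs : \sum_i L i 0 = 0.
    by have := congr1 (fun m : 'M[int]_1 => m 0 0) h0; rewrite !mxE eqxx mulr1n.
  exists (dropv u L); rewrite /Au -/(Mu _ _) K1 hs scale0r subr0 //.
- move=> x; split.
    case=> l [l0 ->]; exists (map_mx (fun z : int => z%:~R : R) l); split.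
      by move=> j; rewrite mxE ler0z.
    by rewrite map_mxM.
  case=> lam [lam0 hx].
  set T := Num.ceil (\sum_j lam j 0).
  have : Rcone R (Atilde A) (map_mx (fun z : int => z%:~R : R)
            (col_mx T%:M (x + T *: col u (Abar A)))).
    exists (extv u (T%:~R) lam); split.
      by apply: ext_ge0 => //; exact: Num.Theory.ceil_ge.
    by rewrite miAt Mt_ext mi_lift -miAu -hx.
  move/hns => [L [L0 hL]].
  exists (dropv u L); split; first by move=> j; rewrite mxE.
  by rewrite -(pi_lift (Abar A) u T x) hL pi_Mt.
- exists (piv (Abar A) u ct); split; first exact: Ngen_pi.
  move=> x; split.
    move/lift_int => [T /hiff [Y [hY hXY]]].
    exists (piv (Abar A) u Y); split; first exact: Ngen_pi.
    by rewrite -piD -hXY pi_lift.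
  case=> y [hy ->].
  have [T hT] := Ngen_lift hy.
  have hi : intN R (Atilde A) (col_mx T%:M (y + T *: col u (Abar A)) + ct).
    by apply/hiff; exists (col_mx T%:M (y + T *: col u (Abar A))).
  by have := @proj_int _ _ _ _ u _ hi; rewrite piD pi_lift.
Qed.
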